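(* Let $(X,d,\kappa)$ be a digital metric space of positive, finite diameter, where $d$ is any $\ell_p$ metric. Let $f: X \to X$ be a function and let $a,b,c \in \left(0, \frac{1}{3\,\mathrm{diam}\, X}\right)$ be such that $d(f(x),f(y)) \le a\,d(x,f(x)) + b\,d(y,f(y)) + c\,d(x,y)$ for all $x,y \in X$ (i.e., $f$ is a Reich contraction map with these constants). Then $f$ is a constant function.
   Context: A digital metric space is a triple $(X,d,\kappa)$ with $X\subset\mathbb{Z}^n$, $\kappa$ an adjacency relation on $X$, and $d$ a metric on $X$. The $\ell_p$ metric ($1\le p\le\infty$) is $d(x,y) = (\sum_i |x_i-y_i|^p)^{1/p}$ for $p<\infty$ and $\max_i|x_i-y_i|$ for $p=\infty$. $\mathrm{diam}\, X = \max\{d(x,y) : x,y\in X\}$. *)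

(* Defs.v *)
From HB Require Import structures.
From mathcomp Require Import all_boot all_order all_algebra.
From mathcomp Require Import all_classical all_reals all_analysis.
Set Implicit Arguments. Unset Strict Implicit. Unset Printing Implicit Defensive.
Import Order.TTheory GRing.Theory Num.Theory.
Local Open Scope ring_scope.
Local Open Scope classical_set_scope.

Definition zpoint (n : nat) := 'I_n -> int.

(* Index p of an l_p metric: finite p (with 1 <= p required separately) or infinity. *)
Inductive lp_index (R : realType) := Lp of R | Linf.
Arguments Linf {R}.

Definition lp_valid (R : realType) (p : lp_index R) : Prop :=
  match p with Lp q => 1 <= q | Linf => True end.

Definition lp_dist (R : realType) (n : nat) (p : lp_index R)
  (x y : zpoint n) : R :=
  match p with
  | Lp q => (\sum_(i < n) `|((x i - y i)%:~R : R)| `^ q) `^ q^-1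
  | Linf => \big[Num.max/0]_(i < n) `|((x i - y i)%:~R : R)|
  end.

Definition diam (R : realType) (n : nat) (d : zpoint n -> zpoint n -> R)
  (X : set (zpoint n)) : R :=
  sup [set d x y | x in X & y in X].

Definition finite_diam (R : realType) (n : nat) (d : zpoint n -> zpoint n -> R)
  (X : set (zpoint n)) : Prop :=
  has_ubound [set d x y | x in X & y in X].

(* Main.v *)
Require Import Defs.
From HB Require Import structures.
From mathcomp Require Import all_boot all_order all_algebra.
From mathcomp Require Import all_classical all_reals all_analysis.
Import Order.TTheory GRing.Theory Num.Theory.
Local Open Scope ring_scope.
Local Open Scope classical_set_scope.

Lemma pow_ge1 (R : realType) (a r : R) : 1 <= a -> 0 <= r -> 1 <= a `^ r.
Proof.
move=> a1 r0; have := ler_powR a1 r0; by rewrite powRr0.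
Qed.

Arguments pow_ge1 {R a r}.

Lemma lp_dist_ge1 (R : realType) (n : nat) (p : lp_index R) (u v : zpoint n) :
  lp_valid p -> u <> v -> 1 <= lp_dist p u v.
Proof.
move=> hp huv.
have [i hi] : exists i, u i <> v i.
  apply: contrapT => H; apply: huv; apply: boolp.funext => i.
  by apply: contrapT => Hi; apply: H; exists i.
have h1 : 1 <= `|((u i - v i)%:~R : R)|.
  rewrite -intr_norm ler1z -gtz0_ge1 normr_gt0 subr_eq0; exact/eqP.
case: p hp => [q|] /= hq.
- apply: pow_ge1; last by rewrite invr_ge0 (le_trans ler01 hq).
  rewrite (bigD1 i) //=.
  have s0 : 0 <= \sum_(j < n | j != i) `|((u j - v j)%:~R : R)| `^ q.
    by apply: sumr_ge0 => j _; exact: powR_ge0.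
  rewrite -[X in X <= _]addr0; apply: lerD; [exact: (pow_ge1 h1 (le_trans ler01 hq)) | exact: s0].
- by rewrite (bigD1 i) //= le_max h1.
Qed.

Arguments lp_dist_ge1 {R n p u v}.

Theorem mainTheorem7 (R : realType) (n : nat) (X : set (zpoint n))
  (kappa : zpoint n -> zpoint n -> Prop) (p : lp_index R)
  (f : zpoint n -> zpoint n) (a b c : R) :
  lp_valid p ->
  finite_diam (lp_dist p) X ->
  0 < diam (lp_dist p) X ->
  (forall x, X x -> X (f x)) ->
  0 < a -> a < (3 * diam (lp_dist p) X)^-1 ->
  0 < b -> b < (3 * diam (lp_dist p) X)^-1 ->
  0 < c -> c < (3 * diam (lp_dist p) X)^-1 ->
  (forall x y, X x -> X y ->
     lp_dist p (f x) (f y) <=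
       a * lp_dist p x (f x) + b * lp_dist p y (f y) + c * lp_dist p x y) ->
  forall x y, X x -> X y -> f x = f y.
Proof.
move=> hp hfin hD hf a0 aD b0 bD c0 cD hR x y Xx Xy.
set D := diam (lp_dist p) X in hD aD bD cD.
have ub : forall u v, X u -> X v -> lp_dist p u v <= D.
  move=> u v Xu Xv; apply: (ub_le_sup hfin); by exists u => //; exists v.
apply: contrapT => hne.
have h1 := lp_dist_ge1 hp hne.
have := hR x y Xx Xy.
have e1 : a * lp_dist p x (f x) <= a * D by rewrite ler_pM2l //; apply: ub => //; apply: hf.
have e2 : b * lp_dist p y (f y) <= b * D by rewrite ler_pM2l //; apply: ub => //; apply: hf.
have e3 : c * lp_dist p x y <= c * D by rewrite ler_pM2l //; apply: ub.
have hD3 : 0 < 3 * D by rewrite mulr_gt0.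
have k : (a + b + c) * D < 1.
  have : a + b + c < 3 * (3 * D)^-1.
    rewrite (_ : 3 * (3 * D)^-1 = (3 * D)^-1 + (3 * D)^-1 + (3 * D)^-1);
      last by rewrite -!mulr2n -mulrSr mulr_natl.
    by rewrite !ltrD.
  rewrite invfM mulrA divff ?mul1r // => s.
  by rewrite -ltr_pdivlMr // div1r.
move=> hle; have := le_trans h1 hle; apply/negP; rewrite -ltNge.
apply: le_lt_trans k; rewrite !mulrDl; by rewrite !lerD.
Qed.
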